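(* Fix $0<p<1$ and $\lambda>0$, and for each $n$ let $\Delta=\Delta(n)=\frac{-\ln\left(1-\sqrt[n]{p}\right)}{\lambda}$. Then the expected response time of the protocol $\mathrm{CORE}(\Delta)$ in the $\mathrm{EDD}(\lambda)$ model with a global clock satisfies $\mathbb{E}[RT]\in O\!\left(\frac{\log n}{\lambda}\right)$ as $n\to\infty$.
   Context: Agents $i_0,i_1,\ldots,i_n$ share an accurate global clock and are connected by a complete reliable network; the delay of each message is an independent exponential random variable with parameter $\lambda$. At time $0$ the supervisor $i_0$ receives an external input. Protocol $\mathrm{CORE}(\Delta)$: at time $0$, $i_0$ sends a ''trigger'' message to each of $i_1,\ldots,i_n$; upon receiving the trigger, agent $i_k$ waits until the global time is at least $\Delta$ and then performs its action $\alpha_k$ (acting immediately if the trigger arrives after time $\Delta$). With $t_k$ the time at which $i_k$ performs $\alpha_k$, the response time is $RT=\max\{t_1,\ldots,t_n\}$. *)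

(* Defs.v *)
From HB Require Import structures.
From mathcomp Require Import all_boot all_order all_algebra.
From mathcomp Require Import all_classical all_reals all_analysis.
Set Implicit Arguments. Unset Strict Implicit. Unset Printing Implicit Defensive.
Import Order.TTheory GRing.Theory Num.Theory.
Local Open Scope classical_set_scope.
Local Open Scope ring_scope.

Definition is_exponential {d} {T : measurableType d} {R : realType}
  (P : probability T R) (lam : R) (X : {RV P >-> R}) : Prop :=
  forall A : set R, measurable A -> P (X @^-1` A) = exponential_prob lam A.

Definition mutually_independent {d} {T : measurableType d} {R : realType}
  (P : probability T R) (n : nat) (X : 'I_n -> {RV P >-> R}) : Prop :=
  forall B : 'I_n -> set R, (forall i, measurable (B i)) ->
    P (\bigcap_(i in [set: 'I_n]) (X i @^-1` B i)) =
    (\prod_(i < n) P (X i @^-1` B i))%E.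

Definition core_delta {R : realType} (p lam : R) (n : nat) : R :=
  - ln (1 - p `^ (n%:R)^-1) / lam.

(* Action time of agent k under CORE(Delta): trigger arrives at time D k,
   agent acts at max(Delta, D k). *)
Definition action_time {d} {T : measurableType d} {R : realType}
  (P : probability T R) (n : nat) (Delta : R) (D : 'I_n -> {RV P >-> R})
  (k : 'I_n) : T -> R :=
  fun w => Num.max Delta (D k w).

(* Response time RT = max_k t_k (all t_k >= 0 for Delta >= 0). *)
Definition response_time {d} {T : measurableType d} {R : realType}
  (P : probability T R) (n : nat) (Delta : R) (D : 'I_n -> {RV P >-> R}) :
  T -> R :=
  fun w => \big[Num.max/0]_(k < n) action_time Delta D k w.

Arguments is_exponential {d T R} P lam X.
Arguments mutually_independent {d T R} P {n} X.
Arguments response_time {d T R P n} Delta D _.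

(* Main.v *)
Require Import Defs.
From HB Require Import structures.
From mathcomp Require Import all_boot all_order all_algebra.
From mathcomp Require Import all_classical all_reals all_analysis.
From mathcomp Require Import ring lra.
Import Order.TTheory GRing.Theory Num.Theory.
Local Open Scope classical_set_scope.
Local Open Scope ring_scope.

Section rt.
Context d (T : measurableType d) (R : realType) (P : probability T R).

Lemma mpre (X : {RV P >-> R}) (A : set R) : measurable A -> measurable (X @^-1` A).
Proof. by move=> mA; have := measurable_funP X measurableT A mA; rewrite setTI. Qed.

Lemma union_bound (I : eqType) (A : I -> set T) (s : seq I) (S : set T) :
  (forall i, measurable (A i)) -> measurable S ->
  (forall w, S w -> exists i, i \in s /\ A i w) ->
  (P S <= \sum_(i <- s) P (A i))%E.
Proof.
move=> mA; elim: s S => [|a s IH] S mS HS.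
  rewrite big_nil (_ : S = set0) ?measure0//.
  by apply/seteqP; split=> // w /HS [i []].
rewrite big_cons.
apply: (@le_trans _ _ (P (A a `|` (S `\` A a)))).
  apply: le_measure; rewrite ?inE//.
  - exact: measurableU (mA a) (measurableD mS (mA a)).
  - by move=> w Sw; have [h|h] := pselect (A a w); [left|right].
apply: (le_trans (measureU2 _ _ _)) => //; first exact: measurableD.
apply: leeD => //; apply: IH; first exact: measurableD.
move=> w [Sw nAw]; have [i [ins Aiw]] := HS w Sw.
move: ins; rewrite inE => /orP[/eqP Eia|ins]; last by exists i.
by exfalso; apply: nAw; rewrite -Eia.
Qed.

Lemma exp_tail (lam : R) (X : {RV P >-> R}) (r : R) : 0 < lam ->
  is_exponential P lam X -> 0 < r ->
  P (X @^-1` `]r, +oo[) = (expR (- lam * r))%:E.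
Proof.
move=> hl hX hr.
pose A := X @^-1` `]-oo, 0[.
pose B := X @^-1` `[0, r].
have e1 : P A = 0%E.
  transitivity (exponential_prob lam `]-oo, 0[); first exact: hX.
  rewrite /exponential_prob integral0_eq// => x /=; rewrite in_itv/= => x0.
  by rewrite lt0_exponential_pdf.
have e2 : P B = (1 - (expR (- lam * r))%:E)%E.
  transitivity (exponential_prob lam `[0, r]); first exact: hX.
  exact: exponential_prob_itv0c.
have mA : measurable A by exact: mpre.
have mB : measurable B by exact: mpre.
have -> : X @^-1` `]r, +oo[ = ~` (A `|` B).
  apply/seteqP; split=> x /=; rewrite /A /B /= !in_itv/= => H.
    by case; lra.
  rewrite andbT ltNge; apply/negP => xr; apply: H.
  by case: (ltP (X x) 0) => x0; [left|right] => //=; rewrite ?x0 ?xr.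
rewrite probability_setC; last exact: measurableU.
rewrite measureU//; last first.
  by apply/seteqP; split=> x //= [] /=; rewrite /A /B /= !in_itv/= => ? /andP[] *; lra.
transitivity (1 - (0 + (1 - (expR (- lam * r))%:E)))%E.
  by congr (1 - (_ + _))%E.
rewrite add0e.
by rewrite oppeB ?addeA ?subee ?add0e // fin_numE.
Qed.

Lemma mbig (I : Type) (f : I -> T -> R) (x0 : R) (s : seq I) :
  (forall k, measurable_fun setT (f k)) ->
  measurable_fun setT (fun w => \big[Num.max/x0]_(k <- s) f k w).
Proof.
move=> mf; elim: s => [|a s IH].
  by under eq_fun do rewrite big_nil; exact: measurable_cst.
under eq_fun do rewrite big_cons.
exact: measurable_realfun.measurable_maxr.
Qed.

Lemma mRT (n : nat) (Delta : R) (D : 'I_n -> {RV P >-> R}) :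
  measurable_fun setT (response_time Delta D).
Proof.
apply: mbig => k; rewrite /action_time.
exact: (measurable_realfun.measurable_maxr (measurable_cst Delta) (measurable_funP (D k))).
Qed.

End rt.

Section rtinst.
Context d (T : measurableType d) (R : realType) (P : probability T R).
Context (n : nat) (Delta : R) (D : 'I_n -> {RV P >-> R}).
HB.instance Definition _ := isMeasurableFun.Build _ _ T R (response_time Delta D) (@mRT d T R P n Delta D).
End rtinst.

Lemma delta_bound (R : realType) (p lam : R) (n : nat) :
  0 < p -> p < 1 -> 0 < lam -> (1 <= n)%N ->
  0 <= core_delta p lam n /\
  core_delta p lam n * lam <= ln (n%:R) + ln (1 + (- ln p)^-1).
Proof.
move=> hp0 hp1 hl hn.
set a := - ln p.
have ha : 0 < a by rewrite /a oppr_gt0 ln_lt0 // hp0 hp1.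
have hn0 : (0 : R) < n%:R by rewrite ltr0n.
set y := a / n%:R.
have hy : 0 < y by rewrite /y divr_gt0.
have hq : p `^ (n%:R)^-1 = expR (- y).
  rewrite /powR (negbTE (lt0r_neq0 hp0)) /y /a; congr expR.
  by rewrite mulNr opprK mulrC.
set q := expR (- y).
have hq1 : q < 1 by rewrite /q expR_lt1 oppr_lt0.
have hqy : q <= (1 + y)^-1.
  rewrite /q expRN lef_pV2 ?posrE ?expR_gt0 ?expR_ge1Dx //.
  by rewrite addr_gt0.
have h1q : y / (1 + y) <= 1 - q.
  have -> : y / (1 + y) = 1 - (1 + y)^-1.
    by field; rewrite gt_eqF // addr_gt0.
  by rewrite lerD2l lerN2.
have hyy : 0 < y / (1 + y) by rewrite divr_gt0 // addr_gt0.
have hdl : core_delta p lam n * lam = - ln (1 - q).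
  by rewrite /core_delta hq -/q mulrVK // unitfE gt_eqF.
split.
  rewrite /core_delta hq -/q divr_ge0 ?(ltW hl) // oppr_ge0 ln_le0 //.
  by rewrite lerBlDr lerDl /q expR_ge0.
rewrite hdl.
apply: (@le_trans _ _ (- ln (y / (1 + y)))).
  by rewrite lerN2 ler_ln // posrE subr_gt0.
rewrite -lnV ?posrE // invf_div.
have -> : (1 + y) / y = 1 + n%:R / a.
  by rewrite /y; field; rewrite !gt_eqF.
rewrite -lnM ?posrE //; last by rewrite addr_gt0 // invr_gt0.
rewrite ler_ln ?posrE //; last 2 first.
- by rewrite addr_gt0 // divr_gt0.
- by rewrite mulr_gt0 // addr_gt0 // invr_gt0.
have hn1 : (1 : R) <= n%:R by rewrite ler1n.
rewrite mulrDr mulr1 mulrC lerD2r //.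
Qed.

Theorem theorem3 (R : realType) (p lam : R) (hp0 : 0 < p) (hp1 : p < 1)
  (hlam : 0 < lam) :
  exists (C : R) (N : nat), 0 < C /\
    forall n : nat, (N <= n)%N ->
    forall (d : measure_display) (T : measurableType d)
      (P : probability T R) (D : 'I_n -> {RV P >-> R}),
      (forall k, is_exponential P lam (D k)) ->
      mutually_independent P D ->
      ('E_P[response_time (core_delta p lam n) D]
         <= (C * (ln (n%:R) / lam))%:E)%E.
Proof.
set K := ln (1 + (- ln p)^-1) + 1.
have ha : 0 < - ln p by rewrite oppr_gt0 ln_lt0 // hp0 hp1.
have hK : 0 < K.
  rewrite /K ltr_pwDr // ln_ge0 // lerDl invr_ge0 ltW //.
have hl2 : 0 < ln (2 : R) by rewrite ln_gt0 // ltr1n.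
exists (2 + K / ln 2), 2%N; split.
  by rewrite addr_gt0 // divr_gt0.
move=> n hn d T P D hexp _.
have [hD0 hD] := @delta_bound R p lam n hp0 hp1 hlam (leq_trans (isT : (1 <= 2)%N) hn).
set Delta := core_delta p lam n in hD0 hD *.
have hn0 : (0 < n)%N by apply: leq_trans hn.
have hln2 : ln (2 : R) <= ln (n%:R) by rewrite ler_ln ?posrE ?ler_nat ?ltr0n.
have hlnn : 0 < ln (n%:R : R) by exact: lt_le_trans hl2 hln2.
set t := ln (n%:R : R) / lam.
have ht : 0 < t by rewrite divr_gt0.
set M := Delta + t.
have hM : 0 < M by rewrite /M ltr_pwDr.
suff hE : ('E_P[response_time Delta D] <= (M + lam^-1)%:E)%E.
  apply: (le_trans hE); rewrite lee_fin.
  rewrite -(ler_pM2r hlam).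
  have hr : 1 <= ln (n%:R : R) / ln 2 by rewrite ler_pdivlMr // mul1r.
  have hKK : K <= K / ln 2 * ln (n%:R : R).
    rewrite mulrAC -[X in X <= _]mulr1 -mulrA ler_pM2l //.
  rewrite -mulrA divfK ?gt_eqF // mulrDl.
  have e1 : t * lam = ln (n%:R : R) by rewrite /t divfK ?gt_eqF.
  rewrite mulrDl mulVf ?gt_eqF // /M mulrDl e1.
  rewrite -/K in hD; move: hD hKK; rewrite /K; lra.
have RT0 : forall w, 0 <= response_time Delta D w.
  move=> w; rewrite /response_time.
  apply: (big_ind (fun x : R => 0 <= x)) => //.
    by move=> x y x0 y0; rewrite le_max x0.
  by move=> k _; rewrite /action_time le_max hD0.
rewrite (@ge0_expectation_ccdf _ _ _ P (response_time Delta D) RT0).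
rewrite (@itv_bndbnd_setU _ _ _ (BRight M)); last 2 first.
  by rewrite bnd_simp ltW.
  by [].
rewrite integral_setU //; last 2 first.
  have h := @ccdf_measurable _ _ _ P (response_time Delta D).
  exact: (measurable_funS measurableT _ h).
  by apply/disj_setPS => x [] /=; rewrite !in_itv/= => /andP[_ h1] /andP[h2 _]; lra.
have h := @ccdf_measurable _ _ _ P (response_time Delta D).
rewrite EFinD; apply: leeD.
  apply: (@le_trans _ _ (\int[lebesgue_measure]_(x in `[0%R, M]) (cst 1%E x))%E).
    apply: ge0_le_integral => //.
    - exact: (measurable_funS measurableT _ h).
    - by move=> x _; rewrite /ccdf; apply: probability_le1.
  rewrite integral_cst // mul1e.
  have e := lebesgue_measure_itv (R:=R) `[0%R, M].
  rewrite /= lte_fin hM in e. rewrite sube0 in e.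
  by rewrite le_eqVlt; apply/orP; left; apply/eqP; exact: e.
have hexpM : forall x, M < x ->
  (ccdf (P:=P) (response_time Delta D) x <= ((n%:R / lam) * exponential_pdf lam x)%:E)%E.
  move=> x hx.
  have hx0 : 0 < x by exact: lt_trans hM hx.
  have -> : ccdf (P:=P) (response_time Delta D) x =
            P (response_time Delta D @^-1` `]x, +oo[) by [].
  apply: (le_trans (@union_bound _ _ _ P 'I_n (fun i => D i @^-1` `]x, +oo[)
           (index_enum 'I_n) _ _ _ _)).
  - by move=> i; exact: mpre.
  - exact: (@mpre _ _ _ P (response_time Delta D)).
  - move=> w /=; rewrite in_itv /= andbT => hw.
    case: (pselect (exists i, x < D i w)) => [[i hi]|hno].
      by exists i; split; [rewrite mem_index_enum|rewrite /= in_itv /= hi].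
    exfalso; move: hw; apply/negP; rewrite -leNgt.
    apply: bigmax_le; first exact: ltW.
    move=> i _; rewrite /action_time ge_max; apply/andP; split.
      by apply: ltW; apply: le_lt_trans hx; rewrite /M lerDl ltW.
    by rewrite leNgt; apply/negP => hi; apply: hno; exists i.
  rewrite (eq_bigr (fun=> (expR (- lam * x))%:E)); last first.
    by move=> i _; exact: (@exp_tail _ _ _ P lam (D i) x hlam (hexp i) hx0).
  rewrite sumEFin lee_fin sumr_const card_ord exponential_pdfE ?(ltW hx0) //=.
  by rewrite mulrA divfK ?gt_eqF // mulr_natl.
apply: (@le_trans _ _ (\int[lebesgue_measure]_(x in `]M, +oo[)
    ((n%:R / lam) * exponential_pdf lam x)%:E)%E).
  apply: ge0_le_integral => //.
  - exact: (measurable_funS measurableT _ h).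
  - apply/measurable_realfun.measurable_EFinP; apply: measurable_realfun.measurable_funM => //.
    exact: (measurable_funS measurableT _ (measurable_exponential_pdf lam)).
  - by move=> x; rewrite /= in_itv /= andbT => hx; exact: hexpM.
under eq_integral do rewrite EFinM.
rewrite ge0_integralZl //; last 3 first.
  - apply/measurable_realfun.measurable_EFinP.
    exact: (measurable_funS measurableT _ (measurable_exponential_pdf lam)).
  - by move=> x _; rewrite lee_fin exponential_pdf_ge0 // ltW.
  - by rewrite lee_fin divr_ge0 // ltW.
have i0 : 'I_n := Ordinal hn0.
have e : exponential_prob lam `]M, +oo[ = (expR (- lam * M))%:E.
  transitivity (P (D i0 @^-1` `]M, +oo[)); first by symmetry; exact: hexp.
  exact: (@exp_tail _ _ _ P lam (D i0) M hlam (hexp i0) hM).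
apply: (@le_trans _ _ ((n%:R / lam)%:E * (expR (- lam * M))%:E)%E).
  by rewrite le_eqVlt; apply/orP; left; apply/eqP; congr (_ * _)%E; exact: e.
rewrite -EFinM lee_fin.
have et : expR (- lam * t) = (n%:R)^-1.
  rewrite mulNr /t mulrC divfK ?gt_eqF // expRN lnK // posrE ltr0n.
  by [].
apply: (@le_trans _ _ (n%:R / lam * expR (- lam * t))).
  rewrite ler_wpM2l ?divr_ge0 ?ler0n ?(ltW hlam) // ler_expR !mulNr lerN2.
  by rewrite ler_pM2l // /M lerDr.
rewrite et mulrAC divff ?mul1r // gt_eqF // ltr0n.
by [].
Qed.
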